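(* Let $T>0$ and let $g:[0,T]\to\mathbb R$ be a right-continuous nondecreasing function such that $g(t)-g(t-)\le\frac12$ for all $t\in(0,T]$. Then the Kurzweil integral equation $$y(t)=1+\int_0^t y(\tau)\,\mathrm dg(\tau)\quad\forall t\in[0,T]$$ has a unique nondecreasing right-continuous solution $y:[0,T]\to[1,\infty)$, and $y(t)\le \mathrm e^{2(g(T)-g(0))}$ for all $t\in[0,T]$.
   Context: The integral is the Kurzweil integral: $J=\int_a^b f(t)\,\mathrm dg(t)$ if for every $\varepsilon>0$ there is a gauge $\delta:[a,b]\to(0,\infty)$ such that $|J-\sum_{j=1}^m f(\tau_j)(g(t_j)-g(t_{j-1}))|<\varepsilon$ for every partition $a=t_0<\dots<t_m=b$, $\tau_j\in[t_{j-1},t_j]$, with $[t_{j-1},t_j]\subset(\tau_j-\delta(\tau_j),\tau_j+\delta(\tau_j))$ for all $j$, $t_{j-1}<\tau_j$ for $j\ge2$, and $\tau_j<t_j$ for $j\le m-1$. $g(t-)$ denotes the left limit. *)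

(* Defs.v *)
From Stdlib Require Import Reals Lra.
Open Scope R_scope.

Fixpoint rs_sum (f g : R -> R) (t tau : nat -> R) (m : nat) : R :=
  match m with
  | O => 0
  | S k => rs_sum f g t tau k + f (tau (S k)) * (g (t (S k)) - g (t k))
  end.

Definition fine_partition (delta : R -> R) (a b : R)
    (m : nat) (t tau : nat -> R) : Prop :=
  t O = a /\ t m = b /\
  (forall j, (1 <= j <= m)%nat ->
     t (j - 1)%nat < t j /\
     t (j - 1)%nat <= tau j <= t j /\
     tau j - delta (tau j) < t (j - 1)%nat /\
     t j < tau j + delta (tau j) /\
     ((2 <= j)%nat -> t (j - 1)%nat < tau j) /\
     ((j <= m - 1)%nat -> tau j < t j)).

Definition KInt (f g : R -> R) (a b J : R) : Prop :=
  forall eps, 0 < eps ->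
  exists delta : R -> R,
    (forall x, a <= x <= b -> 0 < delta x) /\
    forall (m : nat) (t tau : nat -> R),
      fine_partition delta a b m t tau ->
      Rabs (J - rs_sum f g t tau m) < eps.

Definition nondecr_on (T : R) (h : R -> R) : Prop :=
  forall s t, 0 <= s -> s <= t -> t <= T -> h s <= h t.

Definition rcont_on (T : R) (h : R -> R) : Prop :=
  forall t, 0 <= t < T -> forall eps, 0 < eps ->
    exists d, 0 < d /\ forall s, t <= s < t + d -> s <= T -> Rabs (h s - h t) < eps.

Definition left_lim (h : R -> R) (t L : R) : Prop :=
  forall eps, 0 < eps ->
    exists d, 0 < d /\ forall s, t - d < s < t -> Rabs (h s - L) < eps.

Definition is_solution (T : R) (g y : R -> R) : Prop :=
  (forall t, 0 <= t <= T -> 1 <= y t) /\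
  nondecr_on T y /\ rcont_on T y /\
  (forall t, 0 <= t <= T -> exists J, KInt y g 0 t J /\ y t = 1 + J).

(* Main.v *)
Require Import Defs.
From Stdlib Require Import Reals Lra Lia ClassicalEpsilon Classical List.
Open Scope R_scope.

Lemma fp_mono δ a b m t τ : fine_partition δ a b m t τ ->
  forall d j, (j + d <= m)%nat -> t j <= t (j + d)%nat.
Proof.
  intros [H0 [Hm H]] d. induction d as [|d IH]; intros j Hj.
  - rewrite Nat.add_0_r; lra.
  - specialize (IH j ltac:(lia)). destruct (H (j + S d)%nat ltac:(lia)) as [Hlt _].
    replace (j + S d - 1)%nat with (j + d)%nat in Hlt by lia. lra.
Qed.

Lemma fp_le δ a b m t τ : fine_partition δ a b m t τ ->
  forall j k, (j <= k <= m)%nat -> t j <= t k.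
Proof. intros Hf j k Hjk. replace k with (j + (k - j))%nat by lia.
  apply (fp_mono _ _ _ _ _ _ Hf). lia. Qed.

Lemma fp_lt δ a b m t τ : fine_partition δ a b m t τ ->
  forall j k, (j < k <= m)%nat -> t j < t k.
Proof. intros Hf j k Hjk. pose proof Hf as [H0 [Hm H]].
  destruct (H k ltac:(lia)) as [Hlt _].
  assert (t j <= t (k-1)%nat) by (apply (fp_le _ _ _ _ _ _ Hf); lia). lra. Qed.

Lemma fp_range δ a b m t τ : fine_partition δ a b m t τ ->
  forall j, (j <= m)%nat -> a <= t j <= b.
Proof. intros Hf j Hj. pose proof Hf as [H0 [Hm H]].
  split; [rewrite <- H0 | rewrite <- Hm]; apply (fp_le _ _ _ _ _ _ Hf); lia. Qed.

Lemma fp_gauge δ δ' a b m t τ : (forall x, δ' x <= δ x) ->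
  fine_partition δ' a b m t τ -> fine_partition δ a b m t τ.
Proof. intros Hd [H0 [Hm H]]. split; [|split]; auto.
  intros j Hj. destruct (H j Hj) as (A1 & A2 & A3 & A4 & A5 & A6).
  specialize (Hd (τ j)). repeat split; try lra; auto. Qed.

Lemma rs_sum_minus f1 f2 g t τ m :
  rs_sum (fun x => f1 x - f2 x) g t τ m = rs_sum f1 g t τ m - rs_sum f2 g t τ m.
Proof. induction m; simpl; [ring|rewrite IHm; ring]. Qed.

Lemma KInt_minus f1 f2 g a b J1 J2 : KInt f1 g a b J1 -> KInt f2 g a b J2 ->
  KInt (fun x => f1 x - f2 x) g a b (J1 - J2).
Proof.
  intros H1 H2 eps Heps.
  destruct (H1 (eps/2) ltac:(lra)) as [d1 [Hd1 K1]].
  destruct (H2 (eps/2) ltac:(lra)) as [d2 [Hd2 K2]].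
  exists (fun x => Rmin (d1 x) (d2 x)). split.
  - intros x Hx. apply Rmin_glb_lt; auto.
  - intros m t τ Hf. rewrite rs_sum_minus.
    assert (A := K1 m t τ (fp_gauge _ _ _ _ _ _ _ (fun x => Rmin_l _ _) Hf)).
    assert (B := K2 m t τ (fp_gauge _ _ _ _ _ _ _ (fun x => Rmin_r _ _) Hf)).
    replace (J1 - J2 - (rs_sum f1 g t τ m - rs_sum f2 g t τ m)) with
      ((J1 - rs_sum f1 g t τ m) - (J2 - rs_sum f2 g t τ m)) by ring.
    eapply Rle_lt_trans; [apply Rabs_triang|]. rewrite Rabs_Ropp. lra.
Qed.

Lemma KInt_point f g a J : KInt f g a a J -> J = 0.
Proof.
  intros H. destruct (Req_dec J 0) as [|Hn]; auto. exfalso.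
  assert (Hlt : 0 < Rabs J) by (apply Rabs_pos_lt; auto).
  destruct (H _ Hlt) as [d [Hd K]].
  specialize (K O (fun _ => a) (fun _ => a)).
  assert (Hf : fine_partition d a a O (fun _ => a) (fun _ => a)).
  { split; [|split]; auto. intros j Hj; lia. }
  specialize (K Hf). simpl in K. rewrite Rminus_0_r in K. lra.
Qed.

Lemma rs_bound f g t τ m c B : 0 <= B ->
  (forall j, (1 <= j <= m)%nat -> Rabs (f (τ j)) <= B) ->
  (forall j, (1 <= j <= m)%nat -> t (j-1)%nat < c -> f (τ j) = 0) ->
  (forall j, (1 <= j <= m)%nat -> g (t (j-1)%nat) <= g (t j)) ->
  (forall j, (j <= m)%nat -> t j < c -> g (t j) <= g c) ->
  (forall j, (j <= m)%nat -> c <= t j -> g c <= g (t j)) ->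
  Rabs (rs_sum f g t τ m) <= B * Rmax 0 (g (t m) - g c).
Proof.
  intros HB Hf Hz Hinc Hlo Hhi.
  assert (forall k, (k <= m)%nat -> Rabs (rs_sum f g t τ k) <= B * Rmax 0 (g (t k) - g c)).
  2: apply H; lia.
  induction k as [|k IH]; intros Hk.
  - simpl. rewrite Rabs_R0. apply Rmult_le_pos; auto. apply Rmax_l.
  - simpl. specialize (IH ltac:(lia)).
    specialize (Hinc (S k) ltac:(lia)). simpl in Hinc. rewrite Nat.sub_0_r in Hinc.
    destruct (Rlt_dec (t k) c) as [Hlt|Hge].
    + rewrite (Hz (S k) ltac:(lia)) by (simpl; rewrite Nat.sub_0_r; auto).
      rewrite Rmult_0_l, Rplus_0_r.
      rewrite Rmax_left in IH by (specialize (Hlo k ltac:(lia) Hlt); lra).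
      eapply Rle_trans; [apply IH|]. apply Rmult_le_compat_l; auto.
      apply Rmax_l.
    + apply Rnot_lt_le in Hge.
      specialize (Hhi k ltac:(lia) Hge).
      rewrite Rmax_right in IH by lra.
      rewrite Rmax_right by lra.
      eapply Rle_trans; [apply Rabs_triang|]. rewrite Rabs_mult.
      rewrite (Rabs_right (g (t (S k)) - g (t k))) by lra.
      specialize (Hf (S k) ltac:(lia)).
      assert (Rabs (f (τ (S k))) * (g (t (S k)) - g (t k)) <= B * (g (t (S k)) - g (t k))).
      { apply Rmult_le_compat_r; lra. }
      nra.
Qed.

Definition good (δ : R -> R) (a x : R) : Prop :=
  exists m t τ, (1 <= m)%nat /\ t O = a /\ t m = x /\
  forall j, (1 <= j <= m)%nat ->
     t (j - 1)%nat < t j /\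
     t (j - 1)%nat <= τ j <= t j /\
     τ j - δ (τ j) < t (j - 1)%nat /\
     t j < τ j + δ (τ j) /\
     ((2 <= j)%nat -> t (j - 1)%nat < τ j) /\
     τ j < t j.

Lemma good_fine δ a b : good δ a b -> exists m t τ, fine_partition δ a b m t τ.
Proof.
  intros (m & t & τ & Hm & H0 & H1 & H). exists m, t, τ.
  split; [|split]; auto. intros j Hj.
  destruct (H j Hj) as (A1 & A2 & A3 & A4 & A5 & A6). repeat split; auto; lra.
Qed.

Lemma good_start δ a b : a < b -> 0 < δ a -> good δ a (Rmin b (a + δ a / 2)).
Proof.
  intros Hab Hd. set (x0 := Rmin b (a + δ a / 2)).
  assert (a < x0) by (apply Rmin_glb_lt; lra).
  assert (x0 <= a + δ a / 2) by apply Rmin_r.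
  exists 1%nat, (fun k => match k with O => a | _ => x0 end), (fun _ => a).
  split; [lia|split; [reflexivity|split; [reflexivity|]]].
  intros j Hj. assert (j = 1%nat) by lia. subst j. simpl.
  repeat split; try lra. intros; lia.
Qed.

Lemma good_E1 δ a x : good δ a x -> exists e, 0 < e /\ forall y, x <= y < x + e -> good δ a y.
Proof.
  intros (m & t & τ & Hm & H0 & H1 & H).
  destruct (H m ltac:(lia)) as (A1 & A2 & A3 & A4 & A5 & A6).
  exists (τ m + δ (τ m) - x). split; [lra|]. intros y Hy.
  exists m, (fun k => if Nat.eqb k m then y else t k), τ.
  split; [auto|split; [|split]].
  - destruct (Nat.eqb_spec 0 m); [lia|auto].
  - rewrite Nat.eqb_refl. auto.
  - intros j Hj. rewrite (proj2 (Nat.eqb_neq (j-1) m)) by lia.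
    destruct (Nat.eqb_spec j m) as [->|Hne].
    + repeat split; try lra; auto.
    + destruct (H j Hj) as (B1 & B2 & B3 & B4 & B5 & B6). repeat split; auto; lra.
Qed.

Lemma good_E2 δ a x c y : good δ a x -> x < c -> c - δ c < x -> c < y -> y < c + δ c ->
  good δ a y.
Proof.
  intros (m & t & τ & Hm & H0 & H1 & H) Hxc Hc1 Hcy Hy.
  exists (S m), (fun k => if Nat.leb k m then t k else y),
         (fun k => if Nat.leb k m then τ k else c).
  split; [lia|split; [|split]].
  - simpl. auto.
  - rewrite (proj2 (Nat.leb_nle (S m) m)) by lia. auto.
  - intros j Hj. rewrite (proj2 (Nat.leb_le (j-1) m)) by lia.
    destruct (Nat.leb_spec j m) as [Hjm|Hjm].
    + destruct (H j ltac:(lia)) as (B1 & B2 & B3 & B4 & B5 & B6). repeat split; auto; lra.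
    + assert (j = S m) by lia. subst j. simpl. rewrite Nat.sub_0_r. rewrite H1.
      repeat split; try lra.
Qed.

Lemma good_E3 δ a x b : good δ a x -> x < b -> b - δ b < x -> 0 < δ b ->
  exists m t τ, fine_partition δ a b m t τ.
Proof.
  intros (m & t & τ & Hm & H0 & H1 & H) Hxb Hb Hdb.
  exists (S m), (fun k => if Nat.leb k m then t k else b),
         (fun k => if Nat.leb k m then τ k else b).
  split; [|split].
  - simpl. auto.
  - rewrite (proj2 (Nat.leb_nle (S m) m)) by lia. auto.
  - intros j Hj. rewrite (proj2 (Nat.leb_le (j-1) m)) by lia.
    destruct (Nat.leb_spec j m) as [Hjm|Hjm].
    + destruct (H j ltac:(lia)) as (B1 & B2 & B3 & B4 & B5 & B6). repeat split; auto; lra.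
    + assert (j = S m) by lia. subst j. simpl. rewrite Nat.sub_0_r. rewrite H1.
      repeat split; try lra. intros; lia.
Qed.

Lemma cousin δ a b : a < b -> (forall x, a <= x <= b -> 0 < δ x) ->
  exists m t τ, fine_partition δ a b m t τ.
Proof.
  intros Hab Hd.
  set (S := fun x => a < x <= b /\ good δ a x).
  assert (Hx0 : S (Rmin b (a + δ a / 2))).
  { split; [split|]. apply Rmin_glb_lt; [lra| specialize (Hd a ltac:(lra)); lra].
    apply Rmin_l. apply good_start; auto. apply Hd; lra. }
  assert (Hbd : bound S) by (exists b; intros x [[_ Hx] _]; auto).
  destruct (completeness S Hbd (ex_intro _ _ Hx0)) as [s [Hub Hlub]].
  assert (Has : a < s).
  { specialize (Hub _ Hx0). assert (a < Rmin b (a + δ a / 2)) by apply Hx0. lra. }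
  assert (Hsb : s <= b) by (apply Hlub; intros x [[_ Hx] _]; auto).
  assert (Hds : 0 < δ s) by (apply Hd; lra).
  destruct (classic (good δ a s)) as [Hg|Hng].
  - destruct (Req_dec s b) as [->|Hne]; [apply good_fine; auto|].
    destruct (good_E1 _ _ _ Hg) as [e [He Hy]].
    set (y := Rmin b (s + e/2)).
    assert (s < y) by (apply Rmin_glb_lt; lra).
    assert (y <= s + e/2) by apply Rmin_r.
    assert (S y) by (split; [split; [lra|apply Rmin_l]|apply Hy; lra]).
    specialize (Hub _ H1). lra.
  - assert (Hex : exists x, S x /\ s - δ s < x).
    { apply NNPP. intro Hn.
      assert (is_upper_bound S (s - δ s)).
      { intros x Hx. apply Rnot_lt_le. intro. apply Hn. exists x; auto. }
      specialize (Hlub _ H). lra. }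
    destruct Hex as [x [[[Hax Hxb] Hgx] Hx]].
    assert (Hxs : x <= s) by (apply Hub; split; auto).
    assert (Hxs' : x < s).
    { destruct Hxs as [|<-]; auto. contradiction. }
    destruct (Req_dec s b) as [->|Hne].
    + apply (good_E3 δ a x b); auto.
    + set (y := Rmin b (s + δ s/2)).
      assert (s < y) by (apply Rmin_glb_lt; lra).
      assert (y <= s + δ s/2) by apply Rmin_r.
      assert (S y).
      { split; [split; [lra|apply Rmin_l]|]. apply (good_E2 δ a x s y); auto; lra. }
      specialize (Hub _ H1). lra.
Qed.

Lemma choice_gauge (P : R -> R -> Prop) :
  (forall x, exists d, 0 < d /\ P x d) -> exists δ : R -> R, forall x, 0 < δ x /\ P x (δ x).
Proof.
  intros H. exists (fun x => proj1_sig (constructive_indefinite_description _ (H x))).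
  intros x. exact (proj2_sig (constructive_indefinite_description _ (H x))).
Qed.

Lemma local_KInt (f F g : R -> R) (t : R) : 0 <= t ->
  (forall u v, 0 <= u -> u <= v -> v <= t -> g u <= g v) ->
  (forall τ, 0 <= τ <= t -> forall ε, 0 < ε -> exists d, 0 < d /\
     forall u v, 0 <= u <= τ -> τ <= v <= t -> τ - d < u -> v < τ + d ->
       Rabs (F v - F u - f τ * (g v - g u)) <= ε * (g v - g u)) ->
  KInt f g 0 t (F t - F 0).
Proof.
  intros Ht Hg Hloc eps Heps.
  assert (Hg0 : g 0 <= g t) by (apply Hg; lra).
  set (e := eps / (2 * (g t - g 0 + 1))).
  assert (He : 0 < e) by (unfold e; apply Rdiv_lt_0_compat; lra).
  destruct (choice_gauge (fun x d => 0 <= x <= t ->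
     forall u v, 0 <= u <= x -> x <= v <= t -> x - d < u -> v < x + d ->
       Rabs (F v - F u - f x * (g v - g u)) <= e * (g v - g u))) as [δ Hδ].
  { intros x. destruct (classic (0 <= x <= t)) as [Hx|Hx].
    - destruct (Hloc x Hx e He) as [d [Hd Hd']]. exists d; split; auto.
    - exists 1; split; [lra|]. intros; contradiction. }
  exists δ. split; [intros x _; apply Hδ|].
  intros m tt τ Hf.
  pose proof Hf as [H0 [Hm H]].
  assert (Hk : forall k, (k <= m)%nat ->
     Rabs (F (tt k) - F (tt O) - rs_sum f g tt τ k) <= e * (g (tt k) - g (tt O))).
  { induction k as [|k IH]; intros Hk.
    - simpl. replace (F (tt O) - F (tt O) - 0) with 0 by ring. rewrite Rabs_R0. lra.
    - specialize (IH ltac:(lia)). simpl.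
      destruct (H (S k) ltac:(lia)) as (A1 & A2 & A3 & A4 & A5 & A6).
      simpl in A1, A2, A3. rewrite Nat.sub_0_r in A1, A2, A3.
      pose proof (fp_range _ _ _ _ _ _ Hf k ltac:(lia)).
      pose proof (fp_range _ _ _ _ _ _ Hf (S k) ltac:(lia)).
      assert (Hx : 0 <= τ (S k) <= t) by lra.
      destruct (Hδ (τ (S k))) as [_ Hl].
      specialize (Hl Hx (tt k) (tt (S k)) ltac:(lra) ltac:(lra) A3 A4).
      replace (F (tt (S k)) - F (tt O) - (rs_sum f g tt τ k + f (τ (S k)) * (g (tt (S k)) - g (tt k))))
        with ((F (tt k) - F (tt O) - rs_sum f g tt τ k) +
              (F (tt (S k)) - F (tt k) - f (τ (S k)) * (g (tt (S k)) - g (tt k)))) by ring.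
      eapply Rle_trans; [apply Rabs_triang|]. lra. }
  specialize (Hk m (le_n _)). rewrite Hm, H0 in Hk.
  assert (e * (g t - g 0) < eps).
  { apply Rlt_le_trans with (e * (g t - g 0 + 1)).
    - apply Rmult_lt_compat_l; lra.
    - unfold e. replace (eps / (2 * (g t - g 0 + 1)) * (g t - g 0 + 1)) with (eps/2) by (field; lra). lra. }
  lra.
Qed.

Lemma rs_zero f g t τ m : (forall j, (1 <= j <= m)%nat -> f (τ j) = 0) -> rs_sum f g t τ m = 0.
Proof. induction m; intros H; simpl; auto. rewrite IHm by (intros; apply H; lia).
  rewrite (H (S m)) by lia. ring. Qed.

Lemma eps_le x y : (forall ε, 0 < ε -> x <= ε + y) -> x <= y.
Proof. intros H. apply Rnot_lt_le. intro Hlt.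
  specialize (H ((x - y)/2) ltac:(lra)). lra. Qed.

Lemma small_pow M x : 0 <= M -> 0 < x -> exists n, M * (/2)^n < x.
Proof. intros HM Hx.
  destruct (pow_lt_1_zero (/2) ltac:(rewrite Rabs_right; lra) (x / (M+1)) ltac:(apply Rdiv_lt_0_compat; lra)) as [N HN].
  exists N. specialize (HN N (le_n _)).
  assert (0 < (/2)^N) by (apply pow_lt; lra).
  rewrite Rabs_right in HN by lra.
  apply Rmult_lt_compat_l with (r := M+1) in HN; [|lra].
  replace ((M + 1) * (x / (M + 1))) with x in HN by (field; lra). nra.
Qed.

Lemma uniq_zero T g w : 0 < T -> nondecr_on T g -> rcont_on T g ->
  (forall t, 0 < t <= T -> exists L, left_lim g t L /\ g t - L <= 1 / 2) ->
  (forall s, 0 <= s <= T -> KInt w g 0 s (w s)) ->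
  (exists M, forall s, 0 <= s <= T -> Rabs (w s) <= M) ->
  forall s, 0 <= s <= T -> w s = 0.
Proof.
  intros HT Hg Hr Hj Hw [M HM].
  assert (HM0 : 0 <= M) by (eapply Rle_trans; [apply Rabs_pos|apply (HM 0); lra]).
  assert (Hw0 : w 0 = 0) by (apply (KInt_point w g 0); apply Hw; lra).
  set (A := fun s => 0 <= s <= T /\ forall r, 0 <= r <= s -> w r = 0).
  assert (HA0 : A 0) by (split; [lra|intros r Hr'; replace r with 0 by lra; auto]).
  assert (Hbd : bound A) by (exists T; intros x [Hx _]; lra).
  destruct (completeness A Hbd (ex_intro _ _ HA0)) as [ss [Hub Hlub]].
  assert (Hs0 : 0 <= ss) by (apply Hub; auto).
  assert (HsT : ss <= T) by (apply Hlub; intros x [Hx _]; lra).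
  assert (C1 : forall r, 0 <= r < ss -> w r = 0).
  { intros r Hr'. assert (exists a, A a /\ r < a) as [a [[_ Ha] Hra]].
    { apply NNPP; intro Hn. assert (is_upper_bound A r).
      { intros x Hx. apply Rnot_lt_le; intro; apply Hn; exists x; auto. }
      specialize (Hlub _ H); lra. }
    apply Ha; lra. }
  assert (C2 : w ss = 0).
  { destruct (Req_dec ss 0) as [->|Hne]; auto.
    destruct (Hj ss ltac:(lra)) as [L [HL HΔ]].
    assert (forall ε, 0 < ε -> Rabs (w ss) <= 4 * ε).
    { intros ε Hε. destruct (Hw ss ltac:(lra) ε Hε) as [δ [Hδ K]].
      destruct (HL (1/4) ltac:(lra)) as [d [Hd Hd']].
      destruct (cousin (fun x => Rmin (δ x) d) 0 ss ltac:(lra)) as (m & t & τ & Hf).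
      { intros x Hx. apply Rmin_glb_lt; auto. }
      specialize (K m t τ (fp_gauge _ _ _ _ _ _ _ (fun x => Rmin_l _ _) Hf)).
      pose proof Hf as [H0 [Hm H]].
      assert (Hm1 : (1 <= m)%nat).
      { destruct m; [rewrite H0 in Hm; lra|lia]. }
      assert (Hrng := fp_range _ _ _ _ _ _ Hf).
      assert (Htag : forall j, (1 <= j <= m)%nat -> 0 <= τ j <= t j).
      { intros j Hj'. destruct (H j Hj') as (_ & A2 & _). pose proof (Hrng (j-1)%nat ltac:(lia)). lra. }
      assert (Hlow : forall j, (1 <= j < m)%nat -> w (τ j) = 0).
      { intros j Hj'. apply C1. pose proof (Htag j ltac:(lia)).
        pose proof (fp_lt _ _ _ _ _ _ Hf j m ltac:(lia)). lra. }
      destruct (H m ltac:(lia)) as (A1 & A2 & A3 & A4 & A5 & A6).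
      rewrite Hm in A1, A2, A4.
      destruct (Req_dec (τ m) ss) as [Heq|Hne'].
      - assert (Hb := rs_bound w g t τ m (t (m-1)%nat) (Rabs (w ss)) (Rabs_pos _)).
        assert (Hrs : Rabs (rs_sum w g t τ m) <= Rabs (w ss) * Rmax 0 (g (t m) - g (t (m-1)%nat))).
        { apply Hb.
          - intros j Hj'. destruct (Nat.eq_dec j m) as [->|Hn]; [rewrite Heq; lra|].
            rewrite Hlow by lia. rewrite Rabs_R0; apply Rabs_pos.
          - intros j Hj' Hlt. destruct (Nat.eq_dec j m) as [->|Hn]; [lra|]. apply Hlow; lia.
          - intros j Hj'. destruct (H j Hj') as [B1 _]. pose proof (Hrng (j-1)%nat ltac:(lia)).
            pose proof (Hrng j ltac:(lia)). apply Hg; lra.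
          - intros j Hj' Hlt. pose proof (Hrng (m-1)%nat ltac:(lia)).
            pose proof (Hrng j ltac:(lia)). apply Hg; lra.
          - intros j Hj' Hle. pose proof (Hrng (m-1)%nat ltac:(lia)).
            pose proof (Hrng j ltac:(lia)). apply Hg; lra. }
        rewrite Hm in Hrs.
        assert (Hmd : Rmin (δ (τ m)) d <= d) by apply Rmin_r.
        rewrite Heq in A3, Hmd.
        assert (Hc : Rabs (g (t (m-1)%nat) - L) < 1/4) by (apply Hd'; lra).
        apply Rabs_def2 in Hc.
        assert (Hmax : Rmax 0 (g ss - g (t (m - 1)%nat)) <= 3/4) by (apply Rmax_lub; lra).
        assert (Rabs (w ss) * Rmax 0 (g ss - g (t (m - 1)%nat)) <= Rabs (w ss) * (3/4))
          by (apply Rmult_le_compat_l; auto; apply Rabs_pos).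
        assert (Rabs (w ss) <= Rabs (w ss - rs_sum w g t τ m) + Rabs (rs_sum w g t τ m)).
        { replace (w ss) with ((w ss - rs_sum w g t τ m) + rs_sum w g t τ m) at 1 by ring.
          apply Rabs_triang. }
        lra.
      - rewrite rs_zero in K.
        + rewrite Rminus_0_r in K. lra.
        + intros j Hj'. destruct (Nat.eq_dec j m) as [->|Hn]; [|apply Hlow; lia].
          apply C1. pose proof (Htag m ltac:(lia)). lra. }
    destruct (Req_dec (w ss) 0) as [|Hn]; auto. exfalso.
    assert (0 < Rabs (w ss)) by (apply Rabs_pos_lt; auto).
    specialize (H (Rabs (w ss) / 8) ltac:(lra)). lra. }
  assert (C12 : forall r, 0 <= r <= ss -> w r = 0).
  { intros r Hr'. destruct (Req_dec r ss) as [->|Hn]; auto. apply C1; lra. }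
  assert (C3 : ss = T).
  { destruct (Req_dec ss T) as [|Hne]; auto. exfalso.
    destruct (Hr ss ltac:(lra) (1/2) ltac:(lra)) as [d1 [Hd1 Hd1']].
    set (s1 := Rmin T (ss + d1/2)).
    assert (Hs1 : ss < s1) by (apply Rmin_glb_lt; lra).
    assert (Hs1T : s1 <= T) by apply Rmin_l.
    assert (Hs1d : s1 <= ss + d1/2) by apply Rmin_r.
    assert (Hn : forall n s, 0 <= s <= s1 -> Rabs (w s) <= M * (/2)^n).
    { induction n as [|n IH]; intros s Hs.
      - simpl. rewrite Rmult_1_r. apply HM; lra.
      - assert (HB : 0 <= M * (/2)^n) by (apply Rmult_le_pos; auto; apply pow_le; lra).
        destruct (Rle_dec s ss) as [Hle|Hgt].
        + rewrite C12 by lra. rewrite Rabs_R0. simpl. nra.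
        + apply Rnot_le_lt in Hgt.
          replace (M * (/2)^(S n)) with (M * (/2)^n * (1/2)) by (simpl; field).
          apply eps_le. intros ε Hε.
          destruct (Hw s ltac:(lra) ε Hε) as [δ [Hδ K]].
          set (δ' := fun x => if Rlt_dec ss x then Rmin (δ x) (x - ss) else δ x).
          assert (Hδ'le : forall x, δ' x <= δ x).
          { intros x. unfold δ'. destruct (Rlt_dec ss x); [apply Rmin_l|lra]. }
          destruct (cousin δ' 0 s ltac:(lra)) as (m & t & τ & Hf).
          { intros x Hx. unfold δ'. destruct (Rlt_dec ss x); [apply Rmin_glb_lt; auto; lra|auto]. }
          specialize (K m t τ (fp_gauge _ _ _ _ _ _ _ Hδ'le Hf)).
          pose proof Hf as [H0 [Hm H]].
          assert (Hrng := fp_range _ _ _ _ _ _ Hf).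
          assert (Hrs : Rabs (rs_sum w g t τ m) <= M * (/2)^n * Rmax 0 (g (t m) - g ss)).
          { apply rs_bound; auto.
            - intros j Hj'. destruct (H j Hj') as (_ & A2 & _). pose proof (Hrng (j-1)%nat ltac:(lia)).
              pose proof (Hrng j ltac:(lia)). apply IH; lra.
            - intros j Hj' Hlt. destruct (H j Hj') as (_ & A2 & A3 & _).
              pose proof (Hrng (j-1)%nat ltac:(lia)). pose proof (Hrng j ltac:(lia)).
              apply C12. split; [lra|]. apply Rnot_lt_le. intro Hgt'.
              unfold δ' in A3. destruct (Rlt_dec ss (τ j)); [|lra].
              pose proof (Rmin_r (δ (τ j)) (τ j - ss)). lra.
            - intros j Hj'. destruct (H j Hj') as [B1 _]. pose proof (Hrng (j-1)%nat ltac:(lia)).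
              pose proof (Hrng j ltac:(lia)). apply Hg; lra.
            - intros j Hj' Hlt. pose proof (Hrng j ltac:(lia)). apply Hg; lra.
            - intros j Hj' Hle. pose proof (Hrng j ltac:(lia)). apply Hg; lra. }
          rewrite Hm in Hrs.
          assert (Hgs : Rabs (g s - g ss) < 1/2) by (apply Hd1'; lra).
          apply Rabs_def2 in Hgs.
          assert (Hmax : Rmax 0 (g s - g ss) <= 1/2) by (apply Rmax_lub; lra).
          assert (M * (/2)^n * Rmax 0 (g s - g ss) <= M * (/2)^n * (1/2))
            by (apply Rmult_le_compat_l; auto).
          replace (w s) with ((w s - rs_sum w g t τ m) + rs_sum w g t τ m) at 1 by ring.
          eapply Rle_trans; [apply Rabs_triang|]. lra. }
    assert (A s1).
    { split; [lra|]. intros r Hr'. destruct (Req_dec (w r) 0) as [|Hn']; auto. exfalso.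
      assert (0 < Rabs (w r)) by (apply Rabs_pos_lt; auto).
      destruct (small_pow M (Rabs (w r)) HM0 H) as [n Hn2].
      specialize (Hn n r Hr'). lra. }
    specialize (Hub _ H). lra. }
  intros s Hs. apply C12. lra.
Qed.

Definition phi (x : R) := / (1 - x).

Lemma phi_id a : a < 1 -> phi a * (1 - a) = 1.
Proof. intros; unfold phi; field; lra. Qed.
Lemma phi_pos a : a < 1 -> 0 < phi a.
Proof. intros; unfold phi; apply Rinv_0_lt_compat; lra. Qed.
Lemma phi_ge a : 0 <= a <= 2/3 -> 1 + a <= phi a.
Proof. intros Ha. pose proof (phi_id a ltac:(lra)).
  apply Rmult_le_reg_r with (1 - a); [lra|]. nra. Qed.
Lemma phi_mono a b : a <= b -> b < 1 -> phi a <= phi b.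
Proof. intros; unfold phi; apply Rinv_le_contravar; lra. Qed.
Lemma phi_mult a b : 0 <= a -> 0 <= b -> a + b < 1 -> phi a * phi b <= phi (a + b).
Proof. intros. unfold phi. rewrite <- Rinv_mult. apply Rinv_le_contravar; nra. Qed.
Lemma phi_exp a : 0 <= a <= 2/3 -> phi a <= exp (2 * a).
Proof.
  intros Ha.
  replace (2 * a) with (a/2 + a/2 + a/2 + a/2) by field.
  rewrite !exp_plus.
  assert (H1 : 1 + a/2 <= exp (a/2)) by apply exp_ineq1_le.
  assert (H4 : (1 + a/2)^4 <= exp (a/2)^4) by (apply pow_incr; lra).
  replace (exp (a / 2) * exp (a / 2) * exp (a / 2) * exp (a / 2)) with (exp (a/2)^4) by ring.
  apply Rle_trans with ((1 + a/2)^4); auto.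
  pose proof (phi_id a ltac:(lra)). pose proof (phi_pos a ltac:(lra)).
  assert (Hp : 1 <= (1 + a/2)^4 * (1 - a)).
  { assert (a^2 <= 4/9) by nra. assert (a^3 <= 8/27) by nra. assert (a^4 <= 16/81) by nra.
    assert (0 <= a^2) by nra. assert (0 <= a^3) by nra.
    assert (E : (1 + a/2)^4 * (1 - a) = 1 + a * (1 - a/2 - a^2 - 7*a^3/16 - a^4/16)) by field.
    rewrite E. assert (0 <= 1 - a/2 - a^2 - 7*a^3/16 - a^4/16) by lra. nra. }
  apply Rmult_le_reg_r with (1 - a); [lra|]. lra.
Qed.

Fixpoint chain (T : R) (g : R -> R) (x : R) (l : list R) : Prop :=
  match l with nil => True | y :: l' => x <= y /\ y <= T /\ g y - g x <= 2/3 /\ chain T g y l' end.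
Fixpoint cprod (g : R -> R) (x : R) (l : list R) : R :=
  match l with nil => 1 | y :: l' => phi (g y - g x) * cprod g y l' end.
Fixpoint lst (x : R) (l : list R) : R := match l with nil => x | y :: l' => lst y l' end.

Lemma chain_lst T g x l : chain T g x l -> x <= T -> x <= lst x l <= T.
Proof. revert x; induction l as [|y l IH]; intros x Hc HxT; simpl; [lra|].
  destruct Hc as (A1 & A2 & A3 & A4). specialize (IH y A4 A2). lra. Qed.

Lemma cprod_ge T g x l : nondecr_on T g -> 0 <= x -> x <= T -> chain T g x l ->
  1 + (g (lst x l) - g x) <= cprod g x l.
Proof.
  intros Hg. revert x; induction l as [|y l IH]; intros x Hx HxT Hc; simpl; [lra|].
  destruct Hc as (A1 & A2 & A3 & A4).
  specialize (IH y ltac:(lra) A2 A4).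
  pose proof (chain_lst T g y l A4 A2).
  assert (g x <= g y) by (apply Hg; lra).
  assert (g y <= g (lst y l)) by (apply Hg; lra).
  pose proof (phi_ge (g y - g x) ltac:(lra)).
  set (P := cprod g y l) in *. set (a := g y - g x) in *.
  assert (0 <= (phi a - (1 + a)) * P) by (apply Rmult_le_pos; lra).
  assert (0 <= a) by (unfold a; lra).
  assert (0 <= a * (g (lst y l) - g y)) by (apply Rmult_le_pos; lra).
  assert ((1 + a) * (1 + (g (lst y l) - g y)) <= (1 + a) * P) by (apply Rmult_le_compat_l; lra).
  replace (g (lst y l) - g x) with (a + (g (lst y l) - g y)) by (unfold a; ring).
  nra.
Qed.

Lemma cprod_exp T g x l : nondecr_on T g -> 0 <= x -> x <= T -> chain T g x l ->
  cprod g x l <= exp (2 * (g (lst x l) - g x)).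
Proof.
  intros Hg. revert x; induction l as [|y l IH]; intros x Hx HxT Hc; simpl.
  - replace (2 * (g x - g x)) with 0 by ring. rewrite exp_0. lra.
  - destruct Hc as (A1 & A2 & A3 & A4).
    specialize (IH y ltac:(lra) A2 A4).
    pose proof (cprod_ge T g y l Hg ltac:(lra) A2 A4).
    pose proof (chain_lst T g y l A4 A2).
    assert (g x <= g y) by (apply Hg; lra).
    assert (g y <= g (lst y l)) by (apply Hg; lra).
    replace (2 * (g (lst y l) - g x)) with (2 * (g y - g x) + 2 * (g (lst y l) - g y)) by ring.
    rewrite exp_plus. apply Rmult_le_compat; try lra.
    + left; apply phi_pos; lra.
    + apply phi_exp; lra.
Qed.

Lemma chain_app T g x l1 l2 : chain T g x l1 -> chain T g (lst x l1) l2 ->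
  chain T g x (l1 ++ l2) /\ lst x (l1 ++ l2) = lst (lst x l1) l2 /\
  cprod g x (l1 ++ l2) = cprod g x l1 * cprod g (lst x l1) l2.
Proof.
  revert x; induction l1 as [|y l1 IH]; intros x H1 H2; simpl in *.
  - split; [auto|split; [auto|ring]].
  - destruct H1 as (A1 & A2 & A3 & A4). destruct (IH y A4 H2) as (B1 & B2 & B3).
    split; [auto|split; [auto|]]. rewrite B3. ring.
Qed.

Lemma chain_split T g x l w : nondecr_on T g -> 0 <= x -> x <= T -> x <= w -> w <= lst x l ->
  chain T g x l ->
  exists l1 l2, chain T g x l1 /\ lst x l1 = w /\ chain T g w l2 /\ lst w l2 = lst x l /\
    cprod g x l1 * cprod g w l2 <= cprod g x l.
Proof.
  intros Hg. revert x; induction l as [|y l IH]; intros x Hx HxT Hxw Hwl Hc.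
  - simpl in Hwl. exists nil, nil. simpl. repeat split; try lra; auto.
  - simpl in Hwl. destruct Hc as (A1 & A2 & A3 & A4).
    pose proof (chain_lst T g y l A4 A2).
    pose proof (cprod_ge T g y l Hg ltac:(lra) A2 A4).
    assert (g y <= g (lst y l)) by (apply Hg; lra).
    destruct (Rle_dec w y) as [Hwy|Hwy].
    + exists (w :: nil), (y :: l). simpl.
      assert (g x <= g w) by (apply Hg; lra).
      assert (g w <= g y) by (apply Hg; lra).
      repeat split; try lra; auto.
      pose proof (phi_mult (g w - g x) (g y - g w) ltac:(lra) ltac:(lra) ltac:(lra)).
      replace (g w - g x + (g y - g w)) with (g y - g x) in H4 by ring.
      assert (0 <= phi (g w - g x)) by (left; apply phi_pos; lra).
      assert (0 <= phi (g y - g w)) by (left; apply phi_pos; lra).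
      nra.
    + apply Rnot_le_lt in Hwy.
      destruct (IH y ltac:(lra) A2 ltac:(lra) Hwl A4) as (l1 & l2 & B1 & B2 & B3 & B4 & B5).
      exists (y :: l1), l2. simpl. repeat split; auto.
      assert (0 <= phi (g y - g x)) by (left; apply phi_pos; lra).
      rewrite Rmult_assoc; apply Rmult_le_compat_l; auto.
Qed.

Lemma chain_jump T g x l τ L : nondecr_on T g -> chain T g x l -> lst x l = τ -> 0 <= x < τ -> τ <= T ->
  (forall p, 0 <= p < τ -> g p <= L) -> g τ - L <= 2/3 -> phi (g τ - L) <= cprod g x l.
Proof.
  intros Hg. revert x; induction l as [|y l IH]; intros x Hc Hl Hx HτT HL HΔ; simpl in *.
  - lra.
  - destruct Hc as (A1 & A2 & A3 & A4).
    pose proof (chain_lst T g y l A4 A2).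
    pose proof (cprod_ge T g y l Hg ltac:(lra) A2 A4).
    assert (g y <= g (lst y l)) by (apply Hg; lra).
    assert (g x <= g y) by (apply Hg; lra).
    assert (0 < phi (g y - g x)) by (apply phi_pos; lra).
    assert (0 < phi (g τ - L)) by (apply phi_pos; lra).
    destruct (Rlt_dec y τ) as [Hyt|Hyt].
    + specialize (IH y A4 Hl ltac:(lra) HτT HL HΔ).
      pose proof (phi_ge (g y - g x) ltac:(lra)). nra.
    + assert (y = τ) by lra. subst y.
      pose proof (HL x Hx).
      pose proof (phi_mono (g τ - L) (g τ - g x) ltac:(lra) ltac:(lra)). nra.
Qed.

Definition is_inf (E : R -> Prop) (m : R) :=
  (forall x, E x -> m <= x) /\ (forall m', (forall x, E x -> m' <= x) -> m' <= m).

Lemma inf_ex E : (exists x, E x) -> (exists lb, forall x, E x -> lb <= x) -> exists m, is_inf E m.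
Proof.
  intros [x0 Hx0] [lb Hlb].
  assert (Hb : bound (fun x => E (-x))).
  { exists (-lb). intros x Hx. specialize (Hlb _ Hx). lra. }
  assert (Hne : exists x, (fun x => E (-x)) x) by (exists (-x0); simpl; rewrite Ropp_involutive; auto).
  destruct (completeness _ Hb Hne) as [s [Hub Hlub]].
  exists (-s). split.
  - intros x Hx. assert (s >= -x) by (apply Rle_ge, Hub; rewrite Ropp_involutive; auto). lra.
  - intros m' Hm'. assert (s <= -m').
    { apply Hlub. intros x Hx. specialize (Hm' _ Hx). lra. }
    lra.
Qed.

Definition Inf (E : R -> Prop) : R := epsilon (inhabits 0) (fun m => is_inf E m).

Lemma Inf_spec E : (exists x, E x) -> (exists lb, forall x, E x -> lb <= x) -> is_inf E (Inf E).
Proof. intros H1 H2. unfold Inf. apply epsilon_spec. apply inf_ex; auto. Qed.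

Definition Yset T g u v p := exists l, chain T g u l /\ lst u l = v /\ p = cprod g u l.
Definition Y T g u v := Inf (Yset T g u v).

Definition HypG (T : R) (g : R -> R) :=
  0 < T /\ nondecr_on T g /\ rcont_on T g /\
  (forall t, 0 < t <= T -> exists L, left_lim g t L /\ g t - L <= 1 / 2).

Lemma gauge23 T g : HypG T g -> forall x, exists d, 0 < d /\ (0 <= x <= T ->
  forall p q, 0 <= p <= x -> x <= q <= T -> x - d < p -> q < x + d -> g q - g p <= 2/3).
Proof.
  intros (HT & Hg & Hr & Hj) x.
  destruct (classic (0 <= x <= T)) as [Hx|Hx]; [|exists 1; split; [lra|intros; contradiction]].
  assert (Hd1 : exists d1, 0 < d1 /\ forall q, x <= q <= T -> q < x + d1 -> g q - g x <= 1/12).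
  { destruct (Rlt_dec x T) as [HxT|HxT].
    - destruct (Hr x ltac:(lra) (1/12) ltac:(lra)) as [d [Hd Hd']].
      exists d; split; auto. intros q Hq Hq'. specialize (Hd' q ltac:(lra) ltac:(lra)).
      apply Rabs_def2 in Hd'. lra.
    - exists 1; split; [lra|]. intros q Hq _. replace q with x by lra. lra. }
  assert (Hd2 : exists d2, 0 < d2 /\ forall p, 0 <= p <= x -> x - d2 < p -> g x - g p <= 7/12).
  { destruct (Rlt_dec 0 x) as [Hx0|Hx0].
    - destruct (Hj x ltac:(lra)) as [L [HL HΔ]].
      destruct (HL (1/12) ltac:(lra)) as [d [Hd Hd']].
      exists d; split; auto. intros p Hp Hp'.
      destruct (Req_dec p x) as [->|Hne]; [lra|].
      specialize (Hd' p ltac:(lra)). apply Rabs_def2 in Hd'. lra.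
    - exists 1; split; [lra|]. intros p Hp _. replace p with x by lra. lra. }
  destruct Hd1 as [d1 [Hd1 Hd1']]. destruct Hd2 as [d2 [Hd2 Hd2']].
  exists (Rmin d1 d2). split; [apply Rmin_glb_lt; auto|].
  intros _ p q Hp Hq Hp' Hq'.
  pose proof (Rmin_l d1 d2). pose proof (Rmin_r d1 d2).
  specialize (Hd1' q Hq ltac:(lra)). specialize (Hd2' p Hp ltac:(lra)). lra.
Qed.

Fixpoint pl (t : nat -> R) (k n : nat) : list R :=
  match n with O => nil | S n' => t (S k) :: pl t (S k) n' end.

Lemma pl_chain T g t : forall n k,
  (forall j, (k < j <= k + n)%nat -> t (j-1)%nat <= t j /\ t j <= T /\ g (t j) - g (t (j-1)%nat) <= 2/3) ->
  chain T g (t k) (pl t k n) /\ lst (t k) (pl t k n) = t (k + n)%nat.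
Proof.
  induction n as [|n IH]; intros k H; simpl.
  - rewrite Nat.add_0_r. auto.
  - destruct (IH (S k)) as [A B].
    { intros j Hj. apply H. lia. }
    destruct (H (S k) ltac:(lia)) as (C1 & C2 & C3). simpl in C1, C3. rewrite Nat.sub_0_r in C1, C3.
    repeat split; auto. rewrite B. f_equal. lia.
Qed.

Lemma chain_exists T g u v : HypG T g -> 0 <= u <= v -> v <= T ->
  exists l, chain T g u l /\ lst u l = v.
Proof.
  intros HG Huv HvT.
  destruct (Req_dec u v) as [<-|Hne]; [exists nil; simpl; auto|].
  destruct (choice_gauge _ (gauge23 T g HG)) as [δ Hδ].
  destruct (cousin δ u v ltac:(lra)) as (m & t & τ & Hf).
  { intros x _. apply Hδ. }
  pose proof Hf as [H0 [Hm H]].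
  assert (Hrng := fp_range _ _ _ _ _ _ Hf).
  destruct (pl_chain T g t m O) as [A B].
  { intros j Hj. destruct (H j ltac:(lia)) as (A1 & A2 & A3 & A4 & _).
    pose proof (Hrng (j-1)%nat ltac:(lia)). pose proof (Hrng j ltac:(lia)).
    repeat split; try lra.
    destruct (Hδ (τ j)) as [_ Hq]. apply Hq; lra. }
  exists (pl t 0 m). rewrite H0 in A, B. split; auto. rewrite B. simpl. auto.
Qed.

Lemma Y_spec T g u v : HypG T g -> 0 <= u <= v -> v <= T -> is_inf (Yset T g u v) (Y T g u v).
Proof.
  intros HG Huv HvT. apply Inf_spec.
  - destruct (chain_exists T g u v HG Huv HvT) as [l [A B]]. exists (cprod g u l), l; auto.
  - exists 1. intros x (l & A & B & ->).
    destruct HG as (HT & Hg & _).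
    pose proof (cprod_ge T g u l Hg ltac:(lra) ltac:(lra) A). rewrite B in H.
    assert (g u <= g v) by (apply Hg; lra). lra.
Qed.

Lemma Y_ge T g u v : HypG T g -> 0 <= u <= v -> v <= T -> 1 + (g v - g u) <= Y T g u v.
Proof.
  intros HG Huv HvT. destruct (Y_spec T g u v HG Huv HvT) as [_ H]. apply H.
  intros x (l & A & B & ->). destruct HG as (HT & Hg & _).
  pose proof (cprod_ge T g u l Hg ltac:(lra) ltac:(lra) A). rewrite B in H0. auto.
Qed.

Lemma Y_ge1 T g u v : HypG T g -> 0 <= u <= v -> v <= T -> 1 <= Y T g u v.
Proof. intros HG Huv HvT. pose proof (Y_ge T g u v HG Huv HvT).
  destruct HG as (HT & Hg & _). assert (g u <= g v) by (apply Hg; lra). lra. Qed.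

Lemma Y_le T g u v l : HypG T g -> 0 <= u <= v -> v <= T -> chain T g u l -> lst u l = v ->
  Y T g u v <= cprod g u l.
Proof. intros HG Huv HvT A B. destruct (Y_spec T g u v HG Huv HvT) as [H _]. apply H.
  exists l; auto. Qed.

Lemma Y_mult T g u v w : HypG T g -> 0 <= u <= v -> v <= w -> w <= T ->
  Y T g u w = Y T g u v * Y T g v w.
Proof.
  intros HG Huv Hvw HwT.
  pose proof (Y_ge1 T g u v HG Huv ltac:(lra)).
  pose proof (Y_ge1 T g v w HG ltac:(lra) HwT).
  pose proof (Y_ge1 T g u w HG ltac:(lra) HwT).
  destruct (Y_spec T g u v HG Huv ltac:(lra)) as [I1 J1].
  destruct (Y_spec T g v w HG ltac:(lra) HwT) as [I2 J2].
  destruct (Y_spec T g u w HG ltac:(lra) HwT) as [I3 J3].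
  pose proof HG as (HT & Hg & _).
  apply Rle_antisym.
  - assert (Hall : forall c1 c2, Yset T g u v c1 -> Yset T g v w c2 -> Y T g u w <= c1 * c2).
    { intros c1 c2 (l1 & A1 & B1 & ->) (l2 & A2 & B2 & ->).
      rewrite <- B1 in A2 |- *. destruct (chain_app T g u l1 l2 A1 A2) as (C1 & C2 & C3).
      rewrite <- C3. apply I3. exists (l1 ++ l2). split; [auto|split; [rewrite C2, B1; auto|reflexivity]]. }
    assert (Hc2 : forall c2, Yset T g v w c2 -> Y T g u w <= Y T g u v * c2).
    { intros c2 Hc2.
      assert (1 <= c2) by (eapply Rle_trans; [|apply I2; eauto]; lra).
      assert (H3 : Y T g u w / c2 <= Y T g u v).
      { apply J1. intros c1 Hc1. specialize (Hall c1 c2 Hc1 Hc2).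
        apply Rmult_le_reg_r with c2; [lra|]. unfold Rdiv. rewrite Rmult_assoc, Rinv_l; lra. }
      apply Rmult_le_compat_r with (r := c2) in H3; [|lra].
      unfold Rdiv in H3. rewrite Rmult_assoc, Rinv_l in H3; lra. }
    assert (H3 : Y T g u w / Y T g u v <= Y T g v w).
    { apply J2. intros c2 Hc. specialize (Hc2 c2 Hc).
      apply Rmult_le_reg_l with (Y T g u v); [lra|].
      unfold Rdiv. rewrite (Rmult_comm (Y T g u w)), <- Rmult_assoc, Rinv_r; lra. }
    apply Rmult_le_compat_l with (r := Y T g u v) in H3; [|lra].
    unfold Rdiv in H3. rewrite (Rmult_comm (Y T g u w)), <- Rmult_assoc, Rinv_r in H3; lra.
  - apply J3. intros c (l & A & B & ->).
    destruct (chain_split T g u l v Hg ltac:(lra) ltac:(lra) ltac:(lra) ltac:(lra) A)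
      as (l1 & l2 & C1 & C2 & C3 & C4 & C5).
    assert (Y T g u v <= cprod g u l1) by (apply I1; exists l1; auto).
    assert (Y T g v w <= cprod g v l2) by (apply I2; exists l2; repeat split; auto; rewrite C4; auto).
    eapply Rle_trans; [|apply C5]. apply Rmult_le_compat; lra.
Qed.

Lemma Y_up T g u v : HypG T g -> 0 <= u <= v -> v <= T -> g v - g u <= 2/3 ->
  Y T g u v <= phi (g v - g u).
Proof. intros HG Huv HvT H. eapply Rle_trans.
  - apply (Y_le T g u v (v :: nil)); simpl; auto. repeat split; auto; lra.
  - simpl. lra. Qed.

Lemma below_L T g τ L : nondecr_on T g -> left_lim g τ L -> 0 < τ <= T ->
  forall p, 0 <= p < τ -> g p <= L.
Proof.
  intros Hg HL Hτ p Hp. apply Rnot_lt_le. intro Hlt.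
  destruct (HL (g p - L) ltac:(lra)) as [d [Hd Hd']].
  set (s := Rmax p (τ - d/2)).
  assert (p <= s) by apply Rmax_l. assert (τ - d/2 <= s) by apply Rmax_r.
  assert (s < τ) by (apply Rmax_lub_lt; lra).
  specialize (Hd' s ltac:(lra)). apply Rabs_def2 in Hd'.
  assert (g p <= g s) by (apply Hg; lra). lra.
Qed.

Lemma Y_jump T g u τ L : HypG T g -> 0 <= u < τ -> τ <= T -> left_lim g τ L -> g τ - L <= 1/2 ->
  phi (g τ - L) <= Y T g u τ.
Proof.
  intros HG Hu HτT HL HΔ. destruct (Y_spec T g u τ HG ltac:(lra) HτT) as [_ J]. apply J.
  intros x (l & A & B & ->). pose proof HG as (HT & Hg & _).
  apply (chain_jump T g u l τ L Hg A B Hu HτT); [|lra].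
  apply (below_L T g τ L Hg HL). lra.
Qed.

Lemma A_bound Q a e : 1 + a <= Q -> Q <= phi a -> 0 <= a -> a <= e/3 -> a <= 2/3 ->
  0 <= Q - 1 - a <= e * a.
Proof.
  intros H1 H2 H3 H4 H5. pose proof (phi_id a ltac:(lra)).
  assert (phi a - 1 - a = a * a * phi a) by (apply Rmult_eq_reg_r with (1 - a); [|lra]; nra).
  assert (phi a <= 3).
  { apply Rmult_le_reg_r with (1 - a); [lra|]. nra. }
  assert (a * a * phi a <= a * a * 3) by (apply Rmult_le_compat_l; nra).
  assert (a * a * 3 <= e * a) by nra.
  lra.
Qed.

Lemma B_bound Q b Δ η e : 1 + b <= Q -> 1 <= Q * (1 - Δ) -> Q * (1 - b) <= 1 -> b = Δ + η ->
  0 <= η <= e * e -> 0 <= b -> Δ < 1 -> 0 < e -> 0 <= / Q - (1 - b) <= e * b.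
Proof.
  intros H1 H2 H3 Hb Hη H0 HΔ He.
  assert (HQ : 0 < Q) by lra.
  set (r := / Q). assert (Hr : Q * r = 1) by (unfold r; field; lra).
  assert (R1 : 1 - b <= r) by (apply Rmult_le_reg_l with Q; lra).
  assert (R2 : r <= 1 - Δ) by (apply Rmult_le_reg_l with Q; lra).
  assert (R3 : r <= 1 - b + b * b).
  { apply Rmult_le_reg_l with Q; [lra|]. rewrite Hr.
    assert (0 <= 1 - b + b * b) by nra.
    assert ((1 + b) * (1 - b + b * b) <= Q * (1 - b + b * b)) by (apply Rmult_le_compat_r; lra).
    nra. }
  split; [lra|].
  destruct (Rle_dec b e) as [Hbe|Hbe].
  - assert (b * b <= e * b) by nra. lra.
  - assert (e * e <= e * b) by nra. lra.
Qed.

Lemma y_local T g t : HypG T g -> 0 <= t <= T -> forall τ, 0 <= τ <= t -> forall ε, 0 < ε ->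
  exists d, 0 < d /\ forall u v, 0 <= u <= τ -> τ <= v <= t -> τ - d < u -> v < τ + d ->
    Rabs (Y T g 0 v - Y T g 0 u - Y T g 0 τ * (g v - g u)) <= ε * (g v - g u).
Proof.
  intros HG Ht τ Hτ ε Hε. pose proof HG as (HT & Hg & Hr & Hj).
  set (yτ := Y T g 0 τ).
  assert (Hyτ : 1 <= yτ) by (apply Y_ge1; auto; lra).
  set (e := ε / (2 * yτ)).
  assert (He : 0 < e) by (unfold e; apply Rdiv_lt_0_compat; lra).
  assert (Hmin : 0 < Rmin (e/3) (2/3)) by (apply Rmin_glb_lt; lra).
  assert (Hd1 : exists d1, 0 < d1 /\ forall v, τ <= v <= T -> v < τ + d1 -> g v - g τ <= Rmin (e/3) (2/3)).
  { destruct (Rlt_dec τ T) as [HτT|HτT].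
    - destruct (Hr τ ltac:(lra) _ Hmin) as [d [Hd Hd']].
      exists d; split; auto. intros v Hv Hv'. specialize (Hd' v ltac:(lra) ltac:(lra)).
      apply Rabs_def2 in Hd'. lra.
    - exists 1; split; [lra|]. intros v Hv _. replace v with τ by lra. lra. }
  destruct Hd1 as [d1 [Hd1 Hd1']].
  assert (Hd2 : exists d2, 0 < d2 /\ forall u, 0 <= u < τ -> τ - d2 < u ->
     Rabs (Y T g 0 τ - Y T g 0 u - yτ * (g τ - g u)) <= ε / 2 * (g τ - g u)).
  { destruct (Rlt_dec 0 τ) as [Hτ0|Hτ0].
    2: { exists 1; split; [lra|]. intros u Hu; lra. }
    destruct (Hj τ ltac:(lra)) as [L [HL HΔ]].
    assert (Hη0 : 0 < Rmin (e * e) (1/6)) by (apply Rmin_glb_lt; nra).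
    destruct (HL _ Hη0) as [d [Hd Hd']].
    exists d; split; auto. intros u Hu Hu'.
    specialize (Hd' u ltac:(lra)). apply Rabs_def2 in Hd'.
    pose proof (Rmin_l (e * e) (1/6)). pose proof (Rmin_r (e * e) (1/6)).
    pose proof (below_L T g τ L Hg HL ltac:(lra) u ltac:(lra)).
    assert (g u <= g τ) by (apply Hg; lra).
    set (Q := Y T g u τ).
    assert (HQ1 : 1 + (g τ - g u) <= Q) by (apply Y_ge; auto; lra).
    assert (HQ2 : phi (g τ - L) <= Q) by (apply Y_jump; auto; lra).
    assert (HQ3 : Q <= phi (g τ - g u)) by (apply Y_up; auto; lra).
    pose proof (phi_id (g τ - L) ltac:(lra)). pose proof (phi_id (g τ - g u) ltac:(lra)).
    assert (1 <= Q * (1 - (g τ - L))).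
    { apply Rle_trans with (phi (g τ - L) * (1 - (g τ - L))); [lra|apply Rmult_le_compat_r; lra]. }
    assert (Q * (1 - (g τ - g u)) <= 1).
    { apply Rle_trans with (phi (g τ - g u) * (1 - (g τ - g u))); [apply Rmult_le_compat_r; lra|lra]. }
    destruct (B_bound Q (g τ - g u) (g τ - L) (L - g u) e HQ1 H5 H6 ltac:(ring)
       ltac:(lra) ltac:(lra) ltac:(lra) He) as [B1 B2].
    assert (Hm : Y T g 0 τ = Y T g 0 u * Q) by (apply Y_mult; auto; lra).
    assert (HQp : 0 < Q) by lra.
    assert (Hyu : Y T g 0 u = yτ * / Q) by (unfold yτ; rewrite Hm; field; lra).
    rewrite Hyu. fold yτ.
    replace (yτ - yτ * / Q - yτ * (g τ - g u)) with (- (yτ * (/ Q - (1 - (g τ - g u))))) by ring.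
    rewrite Rabs_Ropp. rewrite Rabs_right by (apply Rle_ge, Rmult_le_pos; lra).
    apply Rle_trans with (yτ * (e * (g τ - g u))); [apply Rmult_le_compat_l; lra|].
    unfold e. right. field. lra. }
  destruct Hd2 as [d2 [Hd2 Hd2']].
  exists (Rmin d1 d2). split; [apply Rmin_glb_lt; auto|].
  intros u v Hu Hv Hu' Hv'.
  pose proof (Rmin_l d1 d2). pose proof (Rmin_r d1 d2).
  assert (Ha := Hd1' v ltac:(lra) ltac:(lra)).
  pose proof (Rmin_l (e/3) (2/3)). pose proof (Rmin_r (e/3) (2/3)).
  assert (g τ <= g v) by (apply Hg; lra).
  assert (g u <= g τ) by (apply Hg; lra).
  set (Q1 := Y T g τ v).
  assert (HA : Rabs (Y T g 0 v - yτ - yτ * (g v - g τ)) <= ε / 2 * (g v - g τ)).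
  { assert (Y T g 0 v = yτ * Q1) by (apply Y_mult; auto; lra).
    rewrite H5.
    assert (Q1a : 1 + (g v - g τ) <= Q1) by (apply Y_ge; auto; lra).
    assert (Q1b : Q1 <= phi (g v - g τ)) by (apply Y_up; auto; lra).
    destruct (A_bound Q1 (g v - g τ) e Q1a Q1b ltac:(lra) ltac:(lra) ltac:(lra)) as [C1 C2].
    replace (yτ * Q1 - yτ - yτ * (g v - g τ)) with (yτ * (Q1 - 1 - (g v - g τ))) by ring.
    rewrite Rabs_right by (apply Rle_ge, Rmult_le_pos; lra).
    apply Rle_trans with (yτ * (e * (g v - g τ))); [apply Rmult_le_compat_l; lra|].
    unfold e. right. field. lra. }
  assert (HB : Rabs (Y T g 0 τ - Y T g 0 u - yτ * (g τ - g u)) <= ε / 2 * (g τ - g u)).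
  { destruct (Req_dec u τ) as [->|Hne].
    - replace (Y T g 0 τ - Y T g 0 τ - yτ * (g τ - g τ)) with 0 by ring. rewrite Rabs_R0. lra.
    - apply Hd2'; lra. }
  unfold yτ in *.
  replace (Y T g 0 v - Y T g 0 u - Y T g 0 τ * (g v - g u)) with
    ((Y T g 0 v - Y T g 0 τ - Y T g 0 τ * (g v - g τ)) + (Y T g 0 τ - Y T g 0 u - Y T g 0 τ * (g τ - g u)))
    by ring.
  eapply Rle_trans; [apply Rabs_triang|].
  assert (ε / 2 * (g v - g τ) <= ε * (g v - g τ)) by nra.
  assert (ε / 2 * (g τ - g u) <= ε * (g τ - g u)) by nra.
  replace (ε * (g v - g u)) with (ε * (g v - g τ) + ε * (g τ - g u)) by ring. lra.
Qed.

Theorem lemmaA10 (T : R) (g : R -> R) :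
  0 < T ->
  nondecr_on T g ->
  rcont_on T g ->
  (forall t, 0 < t <= T -> exists L, left_lim g t L /\ g t - L <= 1 / 2) ->
  exists y : R -> R,
    is_solution T g y /\
    (forall z : R -> R, is_solution T g z -> forall t, 0 <= t <= T -> z t = y t) /\
    (forall t, 0 <= t <= T -> y t <= exp (2 * (g T - g 0))).
Proof.
  intros HT Hg Hr Hj.
  assert (HG : HypG T g) by (repeat split; auto).
  set (y := Y T g 0).
  assert (Hy1 : forall t, 0 <= t <= T -> 1 <= y t) by (intros; apply Y_ge1; auto; lra).
  assert (Hmono : nondecr_on T y).
  { intros s t Hs Hst HtT. unfold y. rewrite (Y_mult T g 0 s t) by (auto; lra).
    pose proof (Y_ge1 T g s t HG ltac:(lra) HtT). pose proof (Hy1 s ltac:(lra)). unfold y in H0. nra. }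
  assert (Hy0 : y 0 = 1).
  { apply Rle_antisym; [|apply Hy1; lra].
    unfold y. eapply Rle_trans; [apply Y_up; auto; lra|].
    unfold phi. replace (1 - (g 0 - g 0)) with 1 by ring. rewrite Rinv_1. lra. }
  assert (Hsol : is_solution T g y).
  { split; [auto|split; [auto|split]].
    - intros t Ht eps Heps.
      pose proof (Hy1 t ltac:(lra)).
      assert (Hm : 0 < Rmin (2/3) (eps / (3 * y t))) by (apply Rmin_glb_lt; [lra|apply Rdiv_lt_0_compat; lra]).
      destruct (Hr t Ht _ Hm) as [d [Hd Hd']].
      exists d. split; auto. intros s Hs HsT.
      specialize (Hd' s Hs HsT). apply Rabs_def2 in Hd'.
      pose proof (Rmin_l (2/3) (eps / (3 * y t))). pose proof (Rmin_r (2/3) (eps / (3 * y t))).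
      assert (g t <= g s) by (apply Hg; lra).
      unfold y. rewrite (Y_mult T g 0 t s) by (auto; lra). fold y.
      set (a := g s - g t) in *.
      assert (Q1 : 1 <= Y T g t s) by (apply Y_ge1; auto; lra).
      assert (Q2 : Y T g t s <= phi a) by (apply Y_up; auto; unfold a in *; lra).
      pose proof (phi_id a ltac:(lra)).
      assert (phi a - 1 = a * phi a) by lra.
      assert (phi a <= 3) by (apply Rmult_le_reg_r with (1 - a); [lra|]; nra).
      assert (phi a - 1 <= 3 * a) by (pose proof (phi_pos a ltac:(lra)); nra).
      rewrite Rabs_right by (apply Rle_ge; nra).
      assert (y t * (Y T g t s - 1) <= y t * (3 * a)) by (apply Rmult_le_compat_l; lra).
      assert (y t * (3 * a) < eps).
      { apply Rlt_le_trans with (y t * (3 * (eps / (3 * y t)))).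
        - apply Rmult_lt_compat_l; lra.
        - right. field. lra. }
      nra.
    - intros t Ht. exists (y t - y 0). split; [|rewrite Hy0; ring].
      apply local_KInt; [lra| |].
      + intros u v Hu Huv Hv. apply Hg; lra.
      + intros τ Hτ ε Hε. apply (y_local T g t HG Ht τ Hτ ε Hε). }
  exists y. split; [auto|split].
  - intros z Hz t Ht.
    destruct Hz as (Z1 & Z2 & Z3 & Z4).
    destruct Hsol as (S1 & S2 & S3 & S4).
    assert (Hw := uniq_zero T g (fun x => z x - y x) HT Hg Hr Hj).
    assert (z t - y t = 0); [|lra].
    apply (Hw); auto.
    + intros s Hs. destruct (Z4 s Hs) as [J1 [K1 E1]]. destruct (S4 s Hs) as [J2 [K2 E2]].
      replace (z s - y s) with (J1 - J2) by lra. apply KInt_minus; auto.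
    + exists (z T + y T). intros s Hs.
      pose proof (Z1 s Hs). pose proof (S1 s Hs).
      pose proof (Z2 s T ltac:(lra) ltac:(lra) ltac:(lra)).
      pose proof (S2 s T ltac:(lra) ltac:(lra) ltac:(lra)).
      apply Rabs_le. lra.
  - intros t Ht.
    apply Rle_trans with (y T); [apply Hmono; lra|].
    destruct (chain_exists T g 0 T HG ltac:(lra) ltac:(lra)) as [l [A B]].
    apply Rle_trans with (cprod g 0 l); [apply Y_le; auto; lra|].
    pose proof (cprod_exp T g 0 l Hg ltac:(lra) ltac:(lra) A). rewrite B in H. auto.
Qed.
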